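(* Let $\hat{A}\in\{0,1\}^{n\times n}$ be symmetric with exactly $m$ non-zero entries and no zero row, and let $d_i=\sum_j\hat{A}_{ij}$. Let $V=\{1,\dots,n\}$ be partitioned into $k$ disjoint groups $B_1,\dots,B_k$, and let $\overline{F}\in\mathbb{R}^{n\times n}$ be a $k\times k$ block matrix with respect to this partition: there is a symmetric $C\in\mathbb{R}^{k\times k}$ with $\overline{F}_{ab}=C_{pq}$ whenever $a\in B_p$, $b\in B_q$. Set $c=\sum_{a,b}\overline{F}_{ab}\hat{A}_{ab}$. Consider the Lagrange dual function of the maximum entropy model with one constraint on each node degree and one constraint given by $\overline{F}$: $$L(\lambda_1,\dots,\lambda_n,\mu)=\sum_{a=1}^n\sum_{b=1}^n\log\bigl(1+\exp(\lambda_a+\mu\overline{F}_{ab})\bigr)-\sum_{a=1}^n d_a\lambda_a-c\,\mu ,$$ a convex function on $\mathbb{R}^{n+1}$. Let $W\subseteq\mathbb{R}^{n+1}$ be the linear subspace of vectors $(\lambda,\mu)$ with $\lambda_a=\lambda_b$ whenever $a,b$ lie in the same group $B_p$ and $d_a=d_b$. Then $W$ has dimension at most $\sqrt{2km}+1$, the restriction of $L$ to $W$ is an unconstrained convex function of at most $\sqrt{2km}+1$ free variables, $\inf_{W}L=\inf_{\mathbb{R}^{n+1}}L$, and every minimizer of $L$ on $W$ is a global minimizer of $L$. In particular, the maximum entropy model can be solved by optimizing an unconstrained convex problem with at most $\sqrt{2km}+1$ variables.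
   Context: Maximum entropy (MaxEnt) model: given feature matrices $F_l=[f^l_{ij}]\in\mathbb{R}^{n\times n}$, $l=1,\dots,M$, and an observed adjacency matrix $\hat{A}$, one seeks the distribution $P$ over $\{0,1\}^{n\times n}$ maximizing the entropy $-\mathbb{E}_P[\log P(A)]$ subject to $\mathbb{E}_P[\sum_{i,j}f^l_{ij}A_{ij}]=c_l:=\sum_{i,j}f^l_{ij}\hat{A}_{ij}$ for all $l$. Its solution is obtained from minimizers $(\lambda_l)$ of the Lagrange dual $\sum_{i,j}\log(1+\exp(\sum_l f^l_{ij}\lambda_l))-\sum_l c_l\lambda_l$. A degree constraint for node $a$ corresponds to the feature matrix with ones in row $a$ and zeros elsewhere (multiplier $\lambda_a$), and the global constraint corresponds to $\overline{F}$ (multiplier $\mu$), which yields the function $L$ above. *)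

(* Defs.v *)
From Stdlib Require Import Reals Lra Lia.
Open Scope R_scope.

(* Indices are 0-based: nodes are 0..n-1, groups are 0..k-1. *)

Fixpoint rsum (N : nat) (f : nat -> R) : R :=
  match N with
  | O => 0
  | S N' => rsum N' f + f N'
  end.

Fixpoint ncount (N : nat) (P : nat -> bool) : nat :=
  match N with
  | O => O
  | S N' => (ncount N' P + (if P N' then 1 else 0))%nat
  end.

Fixpoint nsum (N : nat) (g : nat -> nat) : nat :=
  match N with
  | O => O
  | S N' => (nsum N' g + g N')%nat
  end.

(* A {0,1}-matrix is given as a boolean matrix A; its real entries are b2R. *)
Definition b2R (b : bool) : R := if b then 1 else 0.

Definition nnz (n : nat) (A : nat -> nat -> bool) : nat :=
  nsum n (fun i => ncount n (fun j => A i j)).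

Definition deg (n : nat) (A : nat -> nat -> bool) (i : nat) : R :=
  rsum n (fun j => b2R (A i j)).

Definition cconst (n : nat) (A : nat -> nat -> bool) (F : nat -> nat -> R) : R :=
  rsum n (fun a => rsum n (fun b => F a b * b2R (A a b))).

(* Vectors of R^{n+1}: a pair (lambda, mu); only lambda a for a < n matter. *)
Definition vec : Type := ((nat -> R) * R)%type.

Definition Ldual (n : nat) (A : nat -> nat -> bool) (F : nat -> nat -> R)
  (x : vec) : R :=
  rsum n (fun a => rsum n (fun b => ln (1 + exp (fst x a + snd x * F a b))))
  - rsum n (fun a => deg n A a * fst x a)
  - cconst n A F * snd x.

Definition veq (n : nat) (x y : vec) : Prop :=
  (forall a, (a < n)%nat -> fst x a = fst y a) /\ snd x = snd y.

Definition vzero : vec := (fun _ => 0, 0).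

Definition lincomb (r : nat) (v : nat -> vec) (coef : nat -> R) : vec :=
  (fun a => rsum r (fun i => coef i * fst (v i) a),
   rsum r (fun i => coef i * snd (v i))).

(* v 0, ..., v (r-1) is a basis of the subspace W (given by membership inW)
   of R^{n+1}; hence dim W = r. *)
Definition is_basis (n : nat) (inW : vec -> Prop) (r : nat) (v : nat -> vec) : Prop :=
  (forall i, (i < r)%nat -> inW (v i)) /\
  (forall w, inW w -> exists coef : nat -> R, veq n w (lincomb r v coef)) /\
  (forall coef : nat -> R, veq n (lincomb r v coef) vzero ->
     forall i, (i < r)%nat -> coef i = 0).

Definition inW (n : nat) (A : nat -> nat -> bool) (grp : nat -> nat) (x : vec) : Prop :=
  forall a b, (a < n)%nat -> (b < n)%nat -> grp a = grp b ->
    deg n A a = deg n A b -> fst x a = fst x b.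

(* convexity of a function on R^r (coordinates nat -> R, only i < r used) *)
Definition convex_on_Rr (G : (nat -> R) -> R) : Prop :=
  forall (c1 c2 : nat -> R) (t : R), 0 <= t <= 1 ->
    G (fun i => t * c1 i + (1 - t) * c2 i) <= t * G c1 + (1 - t) * G c2.

(* Main.v *)
Require Import Defs.
From Stdlib Require Import Reals Lra Lia List Classical.
Open Scope R_scope.

Module MP1.

Lemma rsum_ext N f g : (forall i, (i < N)%nat -> f i = g i) -> rsum N f = rsum N g.
Proof. induction N; simpl; intros H; auto. rewrite IHN; [rewrite H|]; auto; intros; apply H; lia. Qed.

Lemma rsum_lin N f g t s : rsum N (fun i => t * f i + s * g i) = t * rsum N f + s * rsum N g.
Proof. induction N; simpl; [ring|]. rewrite IHN; ring. Qed.

Lemma rsum_scal N f t : rsum N (fun i => t * f i) = t * rsum N f.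
Proof. induction N; simpl; [ring|]. rewrite IHN; ring. Qed.

Lemma rsum_plus N f g : rsum N (fun i => f i + g i) = rsum N f + rsum N g.
Proof. induction N; simpl; [ring|]. rewrite IHN; ring. Qed.

Lemma rsum_minus N f g : rsum N (fun i => f i - g i) = rsum N f - rsum N g.
Proof. induction N; simpl; [ring|]. rewrite IHN; ring. Qed.

Lemma rsum_le N f g : (forall i, (i < N)%nat -> f i <= g i) -> rsum N f <= rsum N g.
Proof. induction N; simpl; intros H; [lra|]. assert (f N <= g N) by (apply H; lia).
 assert (rsum N f <= rsum N g) by (apply IHN; intros; apply H; lia). lra. Qed.

Lemma rsum_zero N f : (forall i, (i < N)%nat -> f i = 0) -> rsum N f = 0.
Proof. intros H; rewrite (rsum_ext N f (fun _ => 0)); auto. clear; induction N; simpl; lra. Qed.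

Lemma rsum_single N f i0 : (i0 < N)%nat -> (forall j, (j < N)%nat -> j <> i0 -> f j = 0) ->
  rsum N f = f i0.
Proof. induction N; intros Hi H; [lia|]. simpl. destruct (Nat.eq_dec i0 N).
 - subst. rewrite rsum_zero; [lra|]. intros; apply H; lia.
 - rewrite IHN; try lia. rewrite (H N); [lra|lia|lia]. intros; apply H; lia. Qed.

Lemma rsum_swap N M f : rsum N (fun a => rsum M (fun b => f a b)) = rsum M (fun b => rsum N (fun a => f a b)).
Proof. induction N; simpl. { induction M; simpl; lra. } rewrite IHN. rewrite <- rsum_plus. reflexivity. Qed.

Lemma rsum_b2R N (P : nat -> bool) : rsum N (fun j => b2R (P j)) = INR (ncount N P).
Proof. induction N; simpl; auto. rewrite IHN, plus_INR. destruct (P N); simpl; lra. Qed.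

Definition sp (t : R) := ln (1 + exp t).
Definition sg (t : R) := exp t / (1 + exp t).

Lemma ln_le' x y : 0 < x -> x <= y -> ln x <= ln y.
Proof. intros Hx Hxy. destruct (Req_dec x y). subst; lra. left; apply ln_increasing; lra. Qed.

Lemma exp_conv p u : 0 <= p <= 1 -> exp (p * u) <= (1 - p) + p * exp u.
Proof. intros Hp.
 assert (HX := exp_ineq1_le (- (p * u))). assert (HY := exp_ineq1_le ((1 - p) * u)).
 assert (E1 : exp (p * u) * exp (- (p*u)) = 1) by (rewrite <- exp_plus; replace (p*u + - (p*u)) with 0 by ring; apply exp_0).
 assert (E2 : exp (p * u) * exp ((1-p)*u) = exp u) by (rewrite <- exp_plus; f_equal; ring).
 assert (HE := exp_pos (p*u)).
 assert (0 <= (1-p) * exp (p*u) * (exp (-(p*u)) - (1 + -(p*u)))).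
 { apply Rmult_le_pos; [apply Rmult_le_pos|]; lra. }
 assert (0 <= p * exp (p*u) * (exp ((1-p)*u) - (1 + (1-p)*u))).
 { apply Rmult_le_pos; [apply Rmult_le_pos|]; lra. }
 nra. Qed.

Lemma sp_tangent z y : sp y >= sp z + sg z * (y - z).
Proof. unfold sp, sg. set (p := exp z / (1 + exp z)).
 assert (Hz := exp_pos z).
 assert (Hp : 0 <= p <= 1). { unfold p; split. apply Rle_mult_inv_pos; lra.
   apply (Rmult_le_reg_r (1 + exp z)); [lra|]. unfold Rdiv; rewrite Rmult_assoc, Rinv_l; lra. }
 assert (H1p : (1 + exp z) * (1 - p) = 1). { unfold p; field; lra. }
 assert (H2p : (1 + exp z) * p = exp z). { unfold p; field; lra. }
 rewrite <- (ln_exp (p * (y - z))), <- ln_mult; try (apply exp_pos || lra).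
 apply Rle_ge, ln_le'. apply Rmult_lt_0_compat; [lra| apply exp_pos].
 assert (H := exp_conv p (y - z) Hp).
 apply Rle_trans with ((1 + exp z) * ((1-p) + p * exp (y - z))).
 apply Rmult_le_compat_l; lra.
 replace ((1 + exp z) * ((1-p) + p * exp (y - z))) with ((1 + exp z) * (1-p) + (1 + exp z) * p * exp (y - z)) by ring.
 rewrite H1p, H2p, <- exp_plus. replace (z + (y - z)) with y by ring. lra. Qed.

Lemma sp_conv t a b : 0 <= t <= 1 -> sp (t * a + (1 - t) * b) <= t * sp a + (1 - t) * sp b.
Proof. intros Ht. set (z := t * a + (1 - t) * b).
 assert (Ha := sp_tangent z a). assert (Hb := sp_tangent z b).
 assert (t * sp a >= t * (sp z + sg z * (a - z))) by (apply Rmult_ge_compat_l; lra).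
 assert ((1-t) * sp b >= (1-t) * (sp z + sg z * (b - z))) by (apply Rmult_ge_compat_l; lra).
 assert (E : t * (sp z + sg z * (a - z)) + (1-t) * (sp z + sg z * (b - z)) = sp z).
 { unfold z; ring. } lra. Qed.
End MP1.
Import MP1.
Module MP2.

Lemma Ldual_ext n A F x y : veq n x y -> Ldual n A F x = Ldual n A F y.
Proof. intros [H1 H2]. unfold Ldual. rewrite H2.
 rewrite (rsum_ext n (fun a => deg n A a * fst x a) (fun a => deg n A a * fst y a)).
 2:{ intros; rewrite H1; auto. }
 f_equal; f_equal. apply rsum_ext; intros a Ha; apply rsum_ext; intros b Hb. rewrite H1; auto. Qed.

Definition vcomb (t : R) (x y : vec) : vec :=
  (fun a => t * fst x a + (1 - t) * fst y a, t * snd x + (1 - t) * snd y).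

Lemma L_convex n A F x y t : 0 <= t <= 1 ->
  Ldual n A F (vcomb t x y) <= t * Ldual n A F x + (1 - t) * Ldual n A F y.
Proof. intros Ht. unfold Ldual, vcomb; simpl.
 set (S := fun (z : vec) => rsum n (fun a => rsum n (fun b => ln (1 + exp (fst z a + snd z * F a b))))).
 assert (HS : rsum n (fun a => rsum n (fun b => ln (1 + exp (t * fst x a + (1 - t) * fst y a + (t * snd x + (1 - t) * snd y) * F a b))))
   <= t * S x + (1 - t) * S y).
 { unfold S. rewrite <- rsum_lin. apply rsum_le; intros a Ha. rewrite <- rsum_lin. apply rsum_le; intros b Hb.
   replace (t * fst x a + (1 - t) * fst y a + (t * snd x + (1 - t) * snd y) * F a b) with
     (t * (fst x a + snd x * F a b) + (1 - t) * (fst y a + snd y * F a b)) by ring.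
   apply (sp_conv t); auto. }
 unfold S in HS.
 rewrite (rsum_ext n (fun a => deg n A a * (t * fst x a + (1 - t) * fst y a))
   (fun a => t * (deg n A a * fst x a) + (1 - t) * (deg n A a * fst y a))) by (intros; ring).
 rewrite rsum_lin. nra. Qed.

Lemma lincomb_comb n r v c1 c2 t :
  veq n (lincomb r v (fun i => t * c1 i + (1 - t) * c2 i)) (vcomb t (lincomb r v c1) (lincomb r v c2)).
Proof. unfold veq, lincomb, vcomb; simpl. split.
 - intros a _. rewrite <- rsum_lin. apply rsum_ext; intros; ring.
 - rewrite <- rsum_lin. apply rsum_ext; intros; ring. Qed.

Lemma L_lincomb_convex n A F r v : convex_on_Rr (fun coef => Ldual n A F (lincomb r v coef)).
Proof. intros c1 c2 t Ht. rewrite (Ldual_ext _ _ _ _ _ (lincomb_comb n r v c1 c2 t)). apply L_convex; auto. Qed.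
End MP2.
Import MP2.
Module MP3.

Definition dn n (A : nat -> nat -> bool) a := ncount n (fun j => A a j).
Definition Eb n A (grp : nat -> nat) a b := (Nat.eqb (grp a) (grp b) && Nat.eqb (dn n A a) (dn n A b))%bool.
Definition Ncls n A grp a := rsum n (fun b => b2R (Eb n A grp a b)).
Definition avg n A grp (x : vec) : vec :=
  (fun a => rsum n (fun b => b2R (Eb n A grp a b) * fst x b) / Ncls n A grp a, snd x).

Lemma Eb_true n A grp a b : Eb n A grp a b = true <-> grp a = grp b /\ dn n A a = dn n A b.
Proof. unfold Eb. rewrite Bool.andb_true_iff, !Nat.eqb_eq. tauto. Qed.

Lemma Eb_refl n A grp a : Eb n A grp a a = true.
Proof. apply Eb_true; auto. Qed.

Lemma Eb_sym n A grp a b : Eb n A grp a b = Eb n A grp b a.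
Proof. unfold Eb. rewrite (Nat.eqb_sym (grp a)), (Nat.eqb_sym (dn n A a)). auto. Qed.

Lemma Eb_congr n A grp a b c : Eb n A grp a b = true -> Eb n A grp a c = Eb n A grp b c.
Proof. intros H. apply Eb_true in H. destruct H as [H1 H2]. unfold Eb. rewrite H1, H2. auto. Qed.

Lemma deg_dn n A a : deg n A a = INR (dn n A a).
Proof. unfold deg, dn. apply rsum_b2R. Qed.

Lemma ncount_pos N P i : (i < N)%nat -> P i = true -> (1 <= ncount N P)%nat.
Proof. induction N; intros Hi HP; [lia|]. simpl. destruct (Nat.eq_dec i N).
 subst. rewrite HP. lia. assert (1 <= ncount N P)%nat by (apply IHN; auto; lia). lia. Qed.

Lemma Ncls_pos n A grp a : (a < n)%nat -> 1 <= Ncls n A grp a.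
Proof. intros Ha. unfold Ncls. rewrite rsum_b2R. apply (le_INR 1).
 apply (ncount_pos _ _ a); auto. apply Eb_refl. Qed.

Lemma Ncls_congr n A grp a c : Eb n A grp a c = true -> Ncls n A grp a = Ncls n A grp c.
Proof. intros H. unfold Ncls. apply rsum_ext; intros. rewrite (Eb_congr _ _ _ _ _ _ H). auto. Qed.

Lemma avg_const n A grp x a c : Eb n A grp a c = true -> fst (avg n A grp x) a = fst (avg n A grp x) c.
Proof. intros H. simpl. rewrite (Ncls_congr _ _ _ _ _ H). f_equal. apply rsum_ext; intros.
 rewrite (Eb_congr _ _ _ _ _ _ H). auto. Qed.

Lemma avg_inW n A grp x : inW n A grp (avg n A grp x).
Proof. intros a b Ha Hb Hg Hd. apply avg_const. apply Eb_true. split; auto.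
 rewrite !deg_dn in Hd. apply INR_eq; auto. Qed.

Lemma avg_zero n A grp x h :
  (forall a c, (a < n)%nat -> (c < n)%nat -> Eb n A grp a c = true -> h a = h c) ->
  rsum n (fun a => h a * (fst x a - fst (avg n A grp x) a)) = 0.
Proof. intros Hh.
 rewrite (rsum_ext n _ (fun a => h a * fst x a - h a * fst (avg n A grp x) a)) by (intros; ring).
 rewrite rsum_minus.
 assert (E : rsum n (fun a => h a * fst (avg n A grp x) a) = rsum n (fun a => h a * fst x a)).
 2:{ rewrite E; ring. }
 simpl.
 rewrite (rsum_ext n _ (fun a => rsum n (fun b => (h a / Ncls n A grp a * b2R (Eb n A grp a b)) * fst x b))).
 2:{ intros a Ha. transitivity ((h a / Ncls n A grp a) * rsum n (fun b => b2R (Eb n A grp a b) * fst x b)); [unfold Rdiv; ring|].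
     rewrite <- rsum_scal. apply rsum_ext; intros; ring. }
 rewrite rsum_swap. apply rsum_ext; intros b Hb.
 rewrite (rsum_ext n _ (fun a => (h b / Ncls n A grp b * b2R (Eb n A grp b a)) * fst x b)).
 2:{ intros a Ha. rewrite (Eb_sym _ _ _ a b). destruct (Eb n A grp b a) eqn:Heq; simpl.
     - rewrite (Hh a b Ha Hb), (Ncls_congr _ _ _ a b); auto. all: rewrite Eb_sym; auto.
     - ring. }
 rewrite (rsum_ext n _ (fun a => (h b / Ncls n A grp b * fst x b) * b2R (Eb n A grp b a))) by (intros; ring).
 rewrite rsum_scal. fold (Ncls n A grp b). assert (H1 := Ncls_pos n A grp b Hb). field. lra. Qed.

Lemma avg_le n A grp (C F : nat -> nat -> R) x
  (HF : forall a b, (a < n)%nat -> (b < n)%nat -> F a b = C (grp a) (grp b)) :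
  Ldual n A F (avg n A grp x) <= Ldual n A F x.
Proof.
 set (lb := fst (avg n A grp x)). set (mu := snd x).
 set (h := fun a => rsum n (fun b => sg (lb a + mu * F a b)) - deg n A a).
 assert (Hz : rsum n (fun a => h a * (fst x a - lb a)) = 0).
 { apply avg_zero. intros a c Ha Hc He. unfold h. rewrite !deg_dn.
   pose proof He as He'. apply Eb_true in He'. destruct He' as [Hg Hd]. rewrite Hd. f_equal.
   apply rsum_ext; intros b Hb. unfold lb. rewrite (avg_const _ _ _ _ _ _ He), !HF, Hg; auto. }
 assert (Hineq : rsum n (fun a => rsum n (fun b => ln (1 + exp (fst x a + mu * F a b)))) >=
   rsum n (fun a => rsum n (fun b => ln (1 + exp (lb a + mu * F a b)))) +
   rsum n (fun a => h a * (fst x a - lb a)) + rsum n (fun a => deg n A a * (fst x a - lb a))).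
 { rewrite <- !rsum_plus. apply Rle_ge, rsum_le; intros a Ha. unfold h.
   replace ((rsum n (fun b => sg (lb a + mu * F a b)) - deg n A a) * (fst x a - lb a))
     with (rsum n (fun b => sg (lb a + mu * F a b) * (fst x a - lb a)) - deg n A a * (fst x a - lb a))
     by (rewrite (rsum_ext n _ (fun b => (fst x a - lb a) * sg (lb a + mu * F a b))) by (intros; ring);
         rewrite rsum_scal; ring).
   assert (Hl : rsum n (fun b => ln (1 + exp (lb a + mu * F a b))) + rsum n (fun b => sg (lb a + mu * F a b) * (fst x a - lb a))
     <= rsum n (fun b => ln (1 + exp (fst x a + mu * F a b)))).
   { rewrite <- rsum_plus. apply rsum_le; intros b Hb.
   pose proof (sp_tangent (lb a + mu * F a b) (fst x a + mu * F a b)) as T. unfold sp in T.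
   replace (fst x a + mu * F a b - (lb a + mu * F a b)) with (fst x a - lb a) in T by ring. lra. }
   lra. }
 rewrite Hz in Hineq.
 unfold Ldual. fold mu. change (snd (avg n A grp x)) with mu. fold lb.
 rewrite (rsum_ext n (fun a => deg n A a * (fst x a - lb a)) (fun a => deg n A a * fst x a - deg n A a * lb a)) in Hineq by (intros; ring).
 rewrite rsum_minus in Hineq. lra. Qed.
End MP3.
Import MP3.
Module MP4.
Local Open Scope nat_scope.

Lemma remove_facts (x : nat) l : In x l -> NoDup l ->
  length l = S (length (remove Nat.eq_dec x l)) /\ list_sum l = x + list_sum (remove Nat.eq_dec x l)
  /\ NoDup (remove Nat.eq_dec x l).
Proof. induction l as [|y t IH]; intros Hin Hnd; [destruct Hin|].
 inversion Hnd; subst. simpl. destruct (Nat.eq_dec x y).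
 - subst. rewrite notin_remove by auto. auto.
 - destruct Hin as [Hin|Hin]; [congruence|]. destruct (IH Hin H2) as [E1 [E2 E3]].
   simpl. rewrite E1, E2. split; [auto|split;[lia|]]. constructor; auto.
   intros Hc. apply in_remove in Hc. tauto. Qed.

Lemma distinct_sum B : forall l, NoDup l -> (forall x, In x l -> 1 <= x <= B) ->
  length l * (length l + 1) <= 2 * list_sum l.
Proof. induction B; intros l Hnd Hb.
 - destruct l as [|y t]; simpl; [lia|]. specialize (Hb y (or_introl eq_refl)). lia.
 - destruct (in_dec Nat.eq_dec (S B) l) as [Hin|Hnin].
   + destruct (remove_facts _ _ Hin Hnd) as [E1 [E2 E3]].
     assert (HL : length l <= S B).
     { rewrite <- (length_seq (S B) 1). apply NoDup_incl_length; auto.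
       intros z Hz. apply in_seq. specialize (Hb z Hz). lia. }
     assert (IHr := IHB (remove Nat.eq_dec (S B) l) E3).
     assert (H : length (remove Nat.eq_dec (S B) l) * (length (remove Nat.eq_dec (S B) l) + 1)
        <= 2 * list_sum (remove Nat.eq_dec (S B) l)).
     { apply IHr. intros z Hz. apply in_remove in Hz. destruct Hz as [Hz1 Hz2].
       specialize (Hb z Hz1). lia. }
     rewrite E1, E2. rewrite E1 in HL. nia.
   + apply IHB; auto. intros z Hz. specialize (Hb z Hz). assert (z <> S B) by (intro; subst; tauto). lia. Qed.

Lemma nsum_ext N f g : (forall i, i < N -> f i = g i) -> nsum N f = nsum N g.
Proof. induction N; simpl; intros H; auto. rewrite IHN; [rewrite H|]; auto; intros; apply H; lia. Qed.

Lemma nsum_plus N f g : nsum N (fun i => f i + g i) = nsum N f + nsum N g.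
Proof. induction N; simpl; auto. rewrite IHN; lia. Qed.

Lemma nsum_le N f g : (forall i, i < N -> f i <= g i) -> nsum N f <= nsum N g.
Proof. induction N; simpl; intros H; auto. assert (f N <= g N) by (apply H; lia).
 assert (nsum N f <= nsum N g) by (apply IHN; intros; apply H; lia). lia. Qed.

Lemma nsum_scal N f c : nsum N (fun i => c * f i) = c * nsum N f.
Proof. induction N; simpl; auto. rewrite IHN; lia. Qed.

Lemma nsum_ind N g : g < N -> nsum N (fun p => if Nat.eqb g p then 1 else 0) = 1.
Proof. induction N; intros H; [lia|]. simpl. destruct (Nat.eqb_spec g N).
 - subst. rewrite (nsum_ext N _ (fun _ => 0)). clear. induction N; simpl; lia.
   intros i Hi. destruct (Nat.eqb_spec N i); [lia|auto].
 - rewrite IHN; lia. Qed.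

Lemma nsum_ind2 N g d : g < N -> nsum N (fun p => if Nat.eqb g p then d else 0) = d.
Proof. intros H. rewrite (nsum_ext N _ (fun p => d * (if Nat.eqb g p then 1 else 0))).
 rewrite nsum_scal, nsum_ind; lia. intros i _; destruct (Nat.eqb g i); lia. Qed.

Lemma nsum_swap N M f : nsum N (fun a => nsum M (fun b => f a b)) = nsum M (fun b => nsum N (fun a => f a b)).
Proof. induction N; simpl. { induction M; simpl; lia. } rewrite IHN, <- nsum_plus. reflexivity. Qed.

Lemma length_split (grp : nat -> nat) k l : (forall a, In a l -> grp a < k) ->
  length l = nsum k (fun p => length (filter (fun a => Nat.eqb (grp a) p) l)).
Proof. induction l as [|x t IH]; intros H; simpl.
 - clear. induction k; simpl; lia.
 - rewrite (nsum_ext k _ (fun p => length (filter (fun a => Nat.eqb (grp a) p) t) + (if Nat.eqb (grp x) p then 1 else 0))).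
   + rewrite nsum_plus, <- IH by (intros; apply H; simpl; auto). rewrite nsum_ind by (apply H; simpl; auto). simpl. lia.
   + intros i _. simpl. destruct (Nat.eqb (grp x) i); simpl; lia. Qed.

Lemma cauchy_aux k c x : 2 * nsum k c * x <= nsum k (fun p => c p * c p) + k * (x * x).
Proof. induction k; simpl; [lia|].
 assert (H2: 2 * c k * x <= c k * c k + x * x).
 { destruct (Nat.le_ge_cases (c k) x) as [h|h].
   - replace x with (c k + (x - c k)) by lia. nia.
   - replace (c k) with (x + (c k - x)) by lia. nia. }
 nia. Qed.

Lemma cauchy k c : nsum k c * nsum k c <= k * nsum k (fun p => c p * c p).
Proof. induction k; simpl; [lia|]. pose proof (cauchy_aux k c (c k)). nia. Qed.

Lemma sum_filter2 (f : nat -> nat) (P Q : nat -> bool) s :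
  list_sum (map f (filter Q (filter P s))) <= list_sum (map f (filter Q s)).
Proof. induction s as [|x t IH]; simpl; auto. destruct (P x); simpl; destruct (Q x); simpl; lia. Qed.

Lemma sum_filter_seq (f : nat -> nat) (Q : nat -> bool) n :
  list_sum (map f (filter Q (seq 0 n))) = nsum n (fun a => if Q a then f a else 0).
Proof. induction n; [reflexivity|]. rewrite seq_S, filter_app, map_app, list_sum_app, IHn. simpl.
 destruct (Q n); simpl; lia. Qed.
End MP4.
Import MP4.
Module MP5.

Definition isfirst n A grp a : bool := forallb (fun b => negb (Eb n A grp a b)) (seq 0 a).
Definition firsts n A grp := filter (isfirst n A grp) (seq 0 n).
Definition rep n A grp i := nth i (firsts n A grp) 0%nat.
Definition bv n A grp (i : nat) : vec :=
  if Nat.ltb i (length (firsts n A grp)) then (fun a => b2R (Eb n A grp a (rep n A grp i)), 0)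
  else (fun _ => 0, 1).

Lemma in_firsts n A grp a : In a (firsts n A grp) <-> (a < n)%nat /\ isfirst n A grp a = true.
Proof. unfold firsts. rewrite filter_In, in_seq. split; intros [h1 h2]; split; auto; lia. Qed.

Lemma firsts_nodup n A grp : NoDup (firsts n A grp).
Proof. apply NoDup_filter, seq_NoDup. Qed.

Lemma exists_first n A grp : forall a, exists b, (b <= a)%nat /\ Eb n A grp a b = true /\ isfirst n A grp b = true.
Proof. intros a. induction a as [a IH] using (well_founded_induction Wf_nat.lt_wf).
 destruct (isfirst n A grp a) eqn:Hf.
 - exists a. split; [lia|]. split; auto. apply Eb_refl.
 - unfold isfirst in Hf. apply Bool.not_true_iff_false in Hf. rewrite forallb_forall in Hf.
   destruct (classic (exists c, In c (seq 0 a) /\ Eb n A grp a c = true)) as [[c [Hc He]]|Hno].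
   + apply in_seq in Hc. destruct (IH c ltac:(lia)) as [b [Hb1 [Hb2 Hb3]]].
     exists b. split; [lia|]. split; auto. rewrite (Eb_congr _ _ _ a c); auto.
   + exfalso. apply Hf. intros c Hc. destruct (Eb n A grp a c) eqn:E; auto. exfalso; apply Hno; eauto.
Qed.

Lemma firsts_unique n A grp x y : In x (firsts n A grp) -> In y (firsts n A grp) ->
  Eb n A grp x y = true -> x = y.
Proof. intros Hx Hy He. apply in_firsts in Hx, Hy. destruct Hx as [_ Hx], Hy as [_ Hy].
 destruct (Nat.lt_total x y) as [h|[h|h]]; auto; exfalso.
 - unfold isfirst in Hy. rewrite forallb_forall in Hy. specialize (Hy x ltac:(apply in_seq; lia)).
   rewrite Eb_sym, He in Hy. discriminate.
 - unfold isfirst in Hx. rewrite forallb_forall in Hx. specialize (Hx y ltac:(apply in_seq; lia)).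
   rewrite He in Hx. discriminate. Qed.

Lemma rep_in n A grp i : (i < length (firsts n A grp))%nat -> In (rep n A grp i) (firsts n A grp).
Proof. intros; apply nth_In; auto. Qed.

Lemma rep_lt n A grp i : (i < length (firsts n A grp))%nat -> (rep n A grp i < n)%nat.
Proof. intros H. apply rep_in, in_firsts in H. tauto. Qed.

Lemma rep_inj n A grp i j : (i < length (firsts n A grp))%nat -> (j < length (firsts n A grp))%nat ->
  Eb n A grp (rep n A grp i) (rep n A grp j) = true -> i = j.
Proof. intros Hi Hj He. apply (firsts_unique _ _ _ _ _ (rep_in _ _ _ _ Hi) (rep_in _ _ _ _ Hj)) in He.
 apply (proj1 (NoDup_nth (firsts n A grp) 0%nat) (firsts_nodup n A grp)); auto. Qed.

Lemma class_index n A grp a : (a < n)%nat -> exists i, (i < length (firsts n A grp))%nat /\ Eb n A grp a (rep n A grp i) = true.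
Proof. intros Ha. destruct (exists_first n A grp a) as [b [Hb1 [Hb2 Hb3]]].
 assert (Hin : In b (firsts n A grp)) by (apply in_firsts; split; auto; lia).
 destruct (In_nth _ _ 0%nat Hin) as [i [Hi Hn]]. exists i. split; auto. unfold rep. rewrite Hn. auto. Qed.

Lemma bv_low n A grp i : (i < length (firsts n A grp))%nat -> bv n A grp i = (fun a => b2R (Eb n A grp a (rep n A grp i)), 0).
Proof. intros H. unfold bv. apply Nat.ltb_lt in H. rewrite H. auto. Qed.

Lemma bv_top n A grp : bv n A grp (length (firsts n A grp)) = (fun _ => 0, 1).
Proof. unfold bv. rewrite Nat.ltb_irrefl. auto. Qed.

Lemma basis_ok n A grp : is_basis n (inW n A grp) (S (length (firsts n A grp))) (bv n A grp).
Proof. remember (length (firsts n A grp)) as len eqn:Hlen.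
 assert (Bt : bv n A grp len = (fun _ => 0, 1)) by (rewrite Hlen; apply bv_top).
 assert (Bl : forall i, (i < len)%nat -> bv n A grp i = (fun a => b2R (Eb n A grp a (rep n A grp i)), 0))
   by (intros; apply bv_low; lia).
 assert (Rl : forall i, (i < len)%nat -> (rep n A grp i < n)%nat) by (intros; apply rep_lt; lia).
 assert (Ri : forall i j, (i < len)%nat -> (j < len)%nat -> Eb n A grp (rep n A grp i) (rep n A grp j) = true -> i = j)
   by (intros; apply (rep_inj n A grp); auto; lia).
 assert (Ci : forall a, (a < n)%nat -> exists i, (i < len)%nat /\ Eb n A grp a (rep n A grp i) = true)
   by (rewrite Hlen; apply class_index).
 split; [|split].
 - intros i Hi. destruct (Nat.eq_dec i len) as [->|Hne].
   + rewrite Bt. intros a b _ _ _ _. reflexivity.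
   + rewrite Bl by lia. intros a b Ha Hb Hg Hd. simpl.
     rewrite (Eb_congr _ _ _ a b); auto. apply Eb_true; split; auto. rewrite !deg_dn in Hd; apply INR_eq; auto.
 - intros w Hw. exists (fun i => if Nat.ltb i len then fst w (rep n A grp i) else snd w).
   split.
   + intros a Ha. unfold lincomb; cbn [fst snd]. destruct (Ci a Ha) as [i0 [Hi0 He]].
     rewrite (rsum_single _ _ i0).
     2: lia.
     2:{ intros j Hj Hne. destruct (Nat.eq_dec j len) as [->|Hne2].
         - rewrite Bt; simpl; ring.
         - rewrite Bl by lia; simpl. destruct (Eb n A grp a (rep n A grp j)) eqn:E; [|simpl; ring].
           exfalso; apply Hne; apply Ri; try lia. rewrite <- (Eb_congr _ _ _ a); auto. }
     rewrite Bl by auto. simpl. rewrite He. simpl. replace (Nat.ltb i0 len) with true by (symmetry; apply Nat.ltb_lt; auto).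
     rewrite Rmult_1_r. symmetry. apply Eb_true in He. destruct He as [Hg Hd]. apply Hw; auto.
     rewrite !deg_dn, Hd; auto.
   + unfold lincomb; cbn [fst snd]. rewrite (rsum_single _ _ len).
     2: lia.
     2:{ intros j Hj Hne. rewrite Bl by lia. simpl; ring. }
     rewrite Bt, Nat.ltb_irrefl. simpl. ring.
 - intros coef [H1 H2] i Hi. unfold lincomb in H1, H2; cbn [fst snd] in H1, H2.
   rewrite (rsum_single _ _ len) in H2.
   2: lia.
   2:{ intros j Hj Hne. rewrite Bl by lia. simpl; ring. }
   rewrite Bt in H2. simpl in H2.
   destruct (Nat.eq_dec i len) as [->|Hne]. { lra. }
   assert (Hil : (i < len)%nat) by lia.
   specialize (H1 (rep n A grp i) (Rl _ Hil)).
   rewrite (rsum_single _ _ i) in H1.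
   2: lia.
   2:{ intros j Hj Hne2. destruct (Nat.eq_dec j len) as [->|Hne3].
       - rewrite Bt; simpl; ring.
       - rewrite Bl by lia; simpl. destruct (Eb n A grp (rep n A grp i) (rep n A grp j)) eqn:E; [|simpl; ring].
         exfalso; apply Hne2; symmetry; apply Ri; auto; lia. }
   rewrite Bl in H1 by auto. simpl in H1. rewrite Eb_refl in H1. simpl in H1. lra.
Qed.
End MP5.
Import MP5.
Module MP6.
Local Open Scope nat_scope.

Lemma ncount_le N P : (ncount N P <= N)%nat.
Proof. induction N; simpl; auto. destruct (P N); lia. Qed.

Lemma bound n A grp k m (Hm : nnz n A = m)
  (Hrow : forall i, (i < n)%nat -> exists j, (j < n)%nat /\ A i j = true)
  (Hgrp : forall a, (a < n)%nat -> (grp a < k)%nat) :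
  (length (firsts n A grp) * length (firsts n A grp) <= 2 * k * m)%nat.
Proof.
 set (c := fun p => length (filter (fun a => Nat.eqb (grp a) p) (firsts n A grp))).
 set (S := fun p => nsum n (fun a => if Nat.eqb (grp a) p then dn n A a else 0%nat)).
 assert (Hlen : length (firsts n A grp) = nsum k c).
 { apply length_split. intros a Ha. apply in_firsts in Ha. apply Hgrp; tauto. }
 assert (Hc : forall p, (c p * c p <= 2 * S p)%nat).
 { intros p. set (lp := filter (fun a => Nat.eqb (grp a) p) (firsts n A grp)).
   assert (Hnd : NoDup (map (dn n A) lp)).
   { apply NoDup_map_NoDup_ForallPairs.
     - intros x y Hx Hy Hd. unfold lp in Hx, Hy. apply filter_In in Hx, Hy.
       destruct Hx as [Hx Hgx], Hy as [Hy Hgy]. apply Nat.eqb_eq in Hgx, Hgy.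
       apply (firsts_unique n A grp); auto. apply Eb_true. split; auto. congruence.
     - apply NoDup_filter, firsts_nodup. }
   assert (Hds := distinct_sum n _ Hnd).
   assert (Hsum : (list_sum (map (dn n A) lp) <= S p)%nat).
   { unfold lp, firsts, S. rewrite <- sum_filter_seq. apply sum_filter2. }
   assert (Hb : forall x, In x (map (dn n A) lp) -> (1 <= x <= n)%nat).
   { intros x Hx. apply in_map_iff in Hx. destruct Hx as [a [<- Ha]].
     unfold lp in Ha. apply filter_In in Ha. destruct Ha as [Ha _]. apply in_firsts in Ha.
     destruct Ha as [Ha _]. destruct (Hrow a Ha) as [j [Hj HA]]. split.
     - apply (ncount_pos _ _ j); auto.
     - apply ncount_le. }
   specialize (Hds Hb). rewrite length_map in Hds. fold lp in c. unfold c. fold lp. nia. }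
 assert (HS : nsum k S = m).
 { unfold S. rewrite nsum_swap. rewrite <- Hm. unfold nnz. apply nsum_ext. intros a Ha.
   apply nsum_ind2; auto. }
 rewrite Hlen. pose proof (cauchy k c).
 assert (nsum k (fun p => c p * c p) <= nsum k (fun p => 2 * S p))%nat by (apply nsum_le; auto).
 rewrite nsum_scal, HS in H0. nia. Qed.
End MP6.
Import MP6.
Open Scope R_scope.

Theorem theorem1 (n m k : nat) (A : nat -> nat -> bool) (grp : nat -> nat)
  (C : nat -> nat -> R) (F : nat -> nat -> R)
  (HAsym : forall i j, (i < n)%nat -> (j < n)%nat -> A i j = A j i)
  (Hm : nnz n A = m)
  (Hrow : forall i, (i < n)%nat -> exists j, (j < n)%nat /\ A i j = true)
  (Hgrp : forall a, (a < n)%nat -> (grp a < k)%nat)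
  (Hgrp_ne : forall p, (p < k)%nat -> exists a, (a < n)%nat /\ grp a = p)
  (HCsym : forall p q, (p < k)%nat -> (q < k)%nat -> C p q = C q p)
  (HF : forall a b, (a < n)%nat -> (b < n)%nat -> F a b = C (grp a) (grp b)) :
  let L := Ldual n A F in
  let W := inW n A grp in
  (exists (r : nat) (v : nat -> vec),
      is_basis n W r v /\
      INR r <= sqrt (2 * INR k * INR m) + 1 /\
      convex_on_Rr (fun coef => L (lincomb r v coef))) /\
  (forall (x : vec) (eps : R), 0 < eps -> exists w, W w /\ L w < L x + eps) /\
  (forall w : vec, W w -> (forall w', W w' -> L w <= L w') ->
     forall x : vec, L w <= L x).
Proof.
 intros L W. unfold L, W. split; [|split].
 - exists (S (length (firsts n A grp))), (bv n A grp). split; [apply basis_ok|]. split.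
   + rewrite S_INR. apply Rplus_le_compat_r.
     rewrite <- (sqrt_Rsqr (INR (length (firsts n A grp)))) by apply pos_INR.
     apply sqrt_le_1_alt. unfold Rsqr. rewrite <- mult_INR.
     replace (2 * INR k * INR m) with (INR (2 * k * m)) by (rewrite !mult_INR; simpl; ring).
     apply le_INR. apply bound; auto.
   + apply L_lincomb_convex.
 - intros x eps He. exists (avg n A grp x). split; [apply avg_inW|].
   pose proof (avg_le n A grp C F x HF). lra.
 - intros w Hw Hmin x. pose proof (avg_le n A grp C F x HF).
   pose proof (Hmin (avg n A grp x) (avg_inW n A grp x)). lra.
Qed.
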